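(* Let $(N,\langle\cdot,\cdot\rangle,\varphi)$ be a modified $H$-type group (see context), with $m=\dim\mathfrak v$. The Ricci operator $\mathrm{Rc}$ preserves the splitting $\mathfrak n=\mathfrak z\oplus\mathfrak v$, and $$\mathrm{Rc}|_{\mathfrak v}=-\tfrac{\xi}{2}\,\mathrm{Id}_{\mathfrak v},\qquad \mathrm{Rc}|_{\mathfrak z}=\tfrac m4\,\mathrm{Id}^\dagger_\varphi .$$
   Context: Let $N$ be a 2-step nilpotent real Lie group with Lie algebra $\mathfrak n$, Lie bracket $[\cdot,\cdot]$ and center $\mathfrak z$, endowed with a left-invariant pseudo-Riemannian metric $\langle\cdot,\cdot\rangle$ (identified with an inner product on $\mathfrak n$) for which $\mathfrak z$ is nondegenerate. Put $\mathfrak v=\mathfrak z^\perp$. For $z\in\mathfrak z$ define $j(z)\in\mathrm{End}(\mathfrak v)$ by $\langle [x,y],z\rangle=\langle y,j(z)x\rangle$ for all $x,y\in\mathfrak v$. Given a quadratic form $\varphi$ on $\mathfrak z$, $(N,\langle\cdot,\cdot\rangle,\varphi)$ is a modified $H$-type group if $j(z)^2=-\varphi(z)\,\mathrm{Id}_{\mathfrak v}$ for all $z\in\mathfrak z$. $\langle\cdot,\cdot\rangle_\varphi$ is the polarization of $\varphi$. With $\{z_1,\dots,z_p\}$ a pseudo-orthonormal basis of $\mathfrak z$, $\xi=\sum_{k}\langle z_k,z_k\rangle\varphi(z_k)$. The Ricci operator $\mathrm{Rc}:\mathfrak n\to\mathfrak n$ is defined by $\langle \mathrm{Rc}\,x,y\rangle=\mathrm{Ric}(x,y)$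 for all $x,y\in\mathfrak n$. The operator $\mathrm{Id}^\dagger_\varphi:\mathfrak z\to\mathfrak z$ is defined by $\langle \mathrm{Id}^\dagger_\varphi z,z'\rangle=\langle z,z'\rangle_\varphi$ for all $z,z'\in\mathfrak z$. *)

(* Defs.v *)
(* The Lie algebra n is modelled as R^n = 'rV[R]_n with a
   bracket given as a function; the left-invariant pseudo-Riemannian metric is
   the symmetric nondegenerate Gram matrix G; all curvature quantities of the
   left-invariant metric are computed algebraically on the Lie algebra. *)
From HB Require Import structures.
From mathcomp Require Import all_boot all_order all_algebra.
Set Implicit Arguments. Unset Strict Implicit. Unset Printing Implicit Defensive.
Import Order.TTheory GRing.Theory Num.Theory.
Local Open Scope ring_scope.

Section Defs.
Variables (R : realFieldType) (n : nat).
Variable (G : 'M[R]_n).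
Variable (br : 'rV[R]_n -> 'rV[R]_n -> 'rV[R]_n).

Definition ev (i : 'I_n) : 'rV[R]_n := delta_mx 0 i.

Definition ip (x y : 'rV[R]_n) : R := (x *m G *m y^T) 0 0.

Definition center (x : 'rV[R]_n) : Prop := forall y, br x y = 0.

Definition in_v (x : 'rV[R]_n) : Prop := forall z, center z -> ip x z = 0.

Definition koszul (x y w : 'rV[R]_n) : R :=
  (ip (br x y) w - ip (br y w) x + ip (br w x) y) / 2%:R.

(* Levi-Civita connection nabla_x y, determined by <nabla_x y, e_j> = koszul *)
Definition LC (x y : 'rV[R]_n) : 'rV[R]_n :=
  (\row_j koszul x y (ev j)) *m invmx G.

Definition curv (x y w : 'rV[R]_n) : 'rV[R]_n :=
  LC x (LC y w) - LC y (LC x w) - LC (br x y) w.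

Definition ric (x y : 'rV[R]_n) : R := \sum_i (curv (ev i) x y) 0 i.

(* Ricci operator: <Rc x, y> = Ric(x,y) *)
Definition Rc (x : 'rV[R]_n) : 'rV[R]_n := (\row_j ric x (ev j)) *m invmx G.

End Defs.

Definition polar (R : realFieldType) (n : nat) (phi : 'rV[R]_n -> R)
  (z z' : 'rV[R]_n) : R := (phi (z + z') - phi z - phi z') / 2%:R.

(* Main.v *)
Require Import Defs.
From HB Require Import structures.
From mathcomp Require Import all_boot all_order all_algebra.
From mathcomp Require Import ring.
From Stdlib Require Import ClassicalEpsilon.
Import Order.TTheory GRing.Theory Num.Theory.
Local Open Scope ring_scope.

Section Abs.
Variables (K : realFieldType) (W : lmodType K) (B Jf : W -> W -> W) (f : W -> K) (hh : K).
Hypothesis BDl : forall x y w, B (x + y) w = B x w + B y w.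
Hypothesis BDr : forall x y w, B w (x + y) = B w x + B w y.
Hypothesis BZl : forall a x w, B (a *: x) w = a *: B x w.
Hypothesis BZr : forall a x w, B w (a *: x) = a *: B w x.
Hypothesis BNl : forall x w, B (- x) w = - B x w.
Hypothesis BNr : forall x w, B w (- x) = - B w x.
Hypothesis JDl : forall x y w, Jf (x + y) w = Jf x w + Jf y w.
Hypothesis JDr : forall x y w, Jf w (x + y) = Jf w x + Jf w y.
Hypothesis JZl : forall a x w, Jf (a *: x) w = a *: Jf x w.
Hypothesis JZr : forall a x w, Jf w (a *: x) = a *: Jf w x.
Hypothesis JNl : forall x w, Jf (- x) w = - Jf x w.
Hypothesis JNr : forall x w, Jf w (- x) = - Jf w x.
Hypothesis fD : forall x y, f (x + y) = f x + f y.
Hypothesis fZ : forall a x, f (a *: x) = a * f x.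
Hypothesis fN : forall x, f (- x) = - f x.
Hypothesis B2 : forall x y w, B (B x y) w = 0.
Hypothesis B2r : forall x y w, B w (B x y) = 0.
Hypothesis JJ0 : forall x y u, Jf (Jf x y) u = 0.
Hypothesis JB0 : forall x y u, Jf u (B x y) = 0.

Definition Lc u w := hh *: (B u w - Jf u w - Jf w u).

Lemma abs_curv a b c :
  f (Lc a (Lc b c) - Lc b (Lc a c) - Lc (B a b) c) =
  hh * hh * (- f (B a (Jf b c)) - f (B a (Jf c b))
    + f (Jf a (Jf b c)) + f (Jf a (Jf c b)) - f (Jf (B b c) a)
    + f (B b (Jf a c)) + f (B b (Jf c a)) - f (Jf b (Jf a c))
    - f (Jf b (Jf c a)) + f (Jf (B a c) b))
  + hh * f (Jf (B a b) c).
Proof.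
rewrite /Lc !(BZr, BDr, BNr, BZl, BDl, BNl, JZr, JDr, JNr, JZl, JDl, JNl).
rewrite !(B2, B2r, JJ0, JB0) !(oppr0, sub0r, subr0, add0r, addr0).
rewrite !(fD, fN, fZ).
ring.
Qed.
End Abs.

Section Main.
Variables (R : realFieldType) (n p m : nat) (G : 'M[R]_n)
  (br : 'rV[R]_n -> 'rV[R]_n -> 'rV[R]_n) (phi : 'rV[R]_n -> R)
  (j : 'rV[R]_n -> 'rV[R]_n -> 'rV[R]_n)
  (zb : 'I_p -> 'rV[R]_n) (vb : 'I_m -> 'rV[R]_n).
Hypothesis Gsym : G^T = G.
Hypothesis Gunit : G \in unitmx.
Hypothesis brlin : forall (a : R) x y w, br (a *: x + y) w = a *: br x w + br y w.
Hypothesis brA : forall x y, br x y = - br y x.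
Hypothesis br2 : forall x y w, br (br x y) w = 0.
Hypothesis cnd : forall z, center br z -> (forall z', center br z' -> ip G z z' = 0) -> z = 0.
Hypothesis jdef : forall z x, center br z -> in_v G br x ->
     in_v G br (j z x) /\ (forall y, in_v G br y -> ip G (br x y) z = ip G y (j z x)).
Hypothesis Htype : forall z x, center br z -> in_v G br x -> j z (j z x) = - phi z *: x.
Hypothesis zbc : forall k, center br (zb k).
Hypothesis zbo : forall k l, k != l -> ip G (zb k) (zb l) = 0.
Hypothesis zbn : forall k, ip G (zb k) (zb k) = 1 \/ ip G (zb k) (zb k) = -1.
Hypothesis zbs : forall z, center br z -> exists c : 'I_p -> R, z = \sum_k c k *: zb k.
Hypothesis vbv : forall k, in_v G br (vb k).
Hypothesis vbi : forall c : 'I_m -> R, \sum_k c k *: vb k = 0 -> forall k, c k = 0.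
Hypothesis vbs : forall x, in_v G br x -> exists c : 'I_m -> R, x = \sum_k c k *: vb k.
Hypothesis phiQ : exists Q : 'M[R]_n, forall z, center br z -> phi z = (z *m Q *m z^T) 0 0.

Local Notation ipG := (ip G).
Local Notation e i := (ev R i).
Local Notation cen := (center br).
Local Notation inv := (in_v G br).

Definition lin (f : 'rV[R]_n -> 'rV[R]_n) := forall a x y, f (a *: x + y) = a *: f x + f y.
Definition slin (f : 'rV[R]_n -> R) := forall a x y, f (a *: x + y) = a * f x + f y.

Lemma lin0 f : lin f -> f 0 = 0.
Proof. by move=> hf; have h := hf (-1) 0 0; rewrite scaler0 add0r scaleN1r addNr in h. Qed.
Lemma linD f x y : lin f -> f (x + y) = f x + f y.
Proof. by move=> hf; have := hf 1 x y; rewrite !scale1r. Qed.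
Lemma linZ f a x : lin f -> f (a *: x) = a *: f x.
Proof. by move=> hf; have := hf a x 0; rewrite addr0 lin0 // addr0. Qed.
Lemma linN f x : lin f -> f (- x) = - f x.
Proof. by move=> hf; rewrite -scaleN1r linZ // scaleN1r. Qed.
Lemma linB f x y : lin f -> f (x - y) = f x - f y.
Proof. by move=> hf; rewrite linD // linN. Qed.
Lemma linS f (I : Type) (r : seq I) (P : pred I) (F : I -> 'rV[R]_n) : lin f ->
  f (\sum_(i <- r | P i) F i) = \sum_(i <- r | P i) f (F i).
Proof.
move=> hf; apply: (big_ind2 (fun x y => f x = y)) => //; first exact: lin0.
by move=> x1 x2 y1 y2 <- <-; rewrite linD.
Qed.

Lemma slin0 f : slin f -> f 0 = 0.
Proof. by move=> hf; have h := hf (-1) 0 0; rewrite scaler0 add0r mulN1r addNr in h. Qed.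
Lemma slinD f x y : slin f -> f (x + y) = f x + f y.
Proof. by move=> hf; have := hf 1 x y; rewrite !scale1r mul1r. Qed.
Lemma slinZ f a x : slin f -> f (a *: x) = a * f x.
Proof. by move=> hf; have := hf a x 0; rewrite addr0 slin0 // addr0. Qed.
Lemma slinN f x : slin f -> f (- x) = - f x.
Proof. by move=> hf; rewrite -scaleN1r slinZ // mulN1r. Qed.
Lemma slinB f x y : slin f -> f (x - y) = f x - f y.
Proof. by move=> hf; rewrite slinD // slinN. Qed.
Lemma slinS f (I : Type) (r : seq I) (P : pred I) (F : I -> 'rV[R]_n) : slin f ->
  f (\sum_(i <- r | P i) F i) = \sum_(i <- r | P i) f (F i).
Proof.
move=> hf; apply: (big_ind2 (fun x y => f x = y)) => //; first exact: slin0.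
by move=> x1 x2 y1 y2 <- <-; rewrite slinD.
Qed.

Lemma ipC x y : ipG x y = ipG y x.
Proof.
rewrite /ip; have -> : x *m G *m y^T = (y *m G *m x^T)^T.
  by rewrite !trmx_mul !trmxK Gsym mulmxA.
by rewrite mxE.
Qed.
Lemma ipl w : slin (fun x => ipG x w).
Proof. by move=> a x y; rewrite /ip !mulmxDl -!scalemxAl !mxE. Qed.
Lemma ipr x : slin (ipG x).
Proof. by move=> a y w; rewrite ipC (ipl x) ![ipG _ x]ipC. Qed.

Lemma ipDl x y w : ipG (x + y) w = ipG x w + ipG y w. Proof. exact: (slinD _ _ _ (ipl w)). Qed.
Lemma ipDr x y w : ipG w (x + y) = ipG w x + ipG w y. Proof. exact: (slinD _ _ _ (ipr w)). Qed.
Lemma ipZl a x w : ipG (a *: x) w = a * ipG x w. Proof. exact: (slinZ _ _ _ (ipl w)). Qed.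
Lemma ipZr a x w : ipG w (a *: x) = a * ipG w x. Proof. exact: (slinZ _ _ _ (ipr w)). Qed.
Lemma ipNl x w : ipG (- x) w = - ipG x w. Proof. exact: (slinN _ _ (ipl w)). Qed.
Lemma ipNr x w : ipG w (- x) = - ipG w x. Proof. exact: (slinN _ _ (ipr w)). Qed.
Lemma ipBl x y w : ipG (x - y) w = ipG x w - ipG y w. Proof. exact: (slinB _ _ _ (ipl w)). Qed.
Lemma ipBr x y w : ipG w (x - y) = ipG w x - ipG w y. Proof. exact: (slinB _ _ _ (ipr w)). Qed.
Lemma ip0l w : ipG 0 w = 0. Proof. exact: (slin0 _ (ipl w)). Qed.
Lemma ip0r w : ipG w 0 = 0. Proof. exact: (slin0 _ (ipr w)). Qed.
Lemma ipSl (I : Type) (r : seq I) (P : pred I) (F : I -> 'rV[R]_n) w :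
  ipG (\sum_(i <- r | P i) F i) w = \sum_(i <- r | P i) ipG (F i) w.
Proof. exact: (slinS _ _ _ _ _ (ipl w)). Qed.
Lemma ipSr (I : Type) (r : seq I) (P : pred I) (F : I -> 'rV[R]_n) w :
  ipG w (\sum_(i <- r | P i) F i) = \sum_(i <- r | P i) ipG w (F i).
Proof. exact: (slinS _ _ _ _ _ (ipr w)). Qed.

Lemma brl w : lin (fun x => br x w). Proof. by move=> a x y; rewrite brlin. Qed.
Lemma brr x : lin (br x).
Proof. by move=> a y w; rewrite [LHS]brA brlin (brA x y) (brA x w) opprD scalerN. Qed.
Lemma brDl x y w : br (x + y) w = br x w + br y w. Proof. exact: (linD _ _ _ (brl w)). Qed.
Lemma brDr x y w : br w (x + y) = br w x + br w y. Proof. exact: (linD _ _ _ (brr w)). Qed.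
Lemma brZl a x w : br (a *: x) w = a *: br x w. Proof. exact: (linZ _ _ _ (brl w)). Qed.
Lemma brZr a x w : br w (a *: x) = a *: br w x. Proof. exact: (linZ _ _ _ (brr w)). Qed.
Lemma brNl x w : br (- x) w = - br x w. Proof. exact: (linN _ _ (brl w)). Qed.
Lemma brNr x w : br w (- x) = - br w x. Proof. exact: (linN _ _ (brr w)). Qed.
Lemma brBl x y w : br (x - y) w = br x w - br y w. Proof. exact: (linB _ _ _ (brl w)). Qed.
Lemma brBr x y w : br w (x - y) = br w x - br w y. Proof. exact: (linB _ _ _ (brr w)). Qed.
Lemma br0l w : br 0 w = 0. Proof. exact: (lin0 _ (brl w)). Qed.
Lemma br0r w : br w 0 = 0. Proof. exact: (lin0 _ (brr w)). Qed.

Lemma cen_br x y : cen (br x y). Proof. by move=> w; rewrite br2. Qed.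
Lemma cen_lin a c d : cen c -> cen d -> cen (a *: c + d).
Proof. by move=> hc hd w; rewrite brlin hc hd scaler0 addr0. Qed.
Lemma cen0 : cen 0. Proof. by move=> w; rewrite br0l. Qed.
Lemma cenD c d : cen c -> cen d -> cen (c + d).
Proof. by move=> hc hd; rewrite -[c]scale1r; apply: cen_lin. Qed.
Lemma cenZ a c : cen c -> cen (a *: c).
Proof. by move=> hc; rewrite -[_ *: _]addr0; apply: cen_lin => //; apply: cen0. Qed.
Lemma cen_r c y : cen c -> br y c = 0.
Proof. by move=> hc; rewrite brA hc oppr0. Qed.
Lemma brbr0 x y w : br w (br x y) = 0. Proof. exact: cen_r (cen_br x y). Qed.

Lemma inv_lin a x y : inv x -> inv y -> inv (a *: x + y).
Proof. by move=> hx hy c hc; rewrite ipDl ipZl hx // hy // mulr0 addr0. Qed.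
Lemma ipcv c x : cen c -> inv x -> ipG c x = 0.
Proof. by move=> hc hx; rewrite ipC hx. Qed.


Definition eps k := ipG (zb k) (zb k).
Lemma eps2 k : eps k * eps k = 1.
Proof. by rewrite /eps; case: (zbn k) => ->; rewrite ?mulr1 ?mulrNN ?mulr1. Qed.

Definition P w := \sum_k (eps k * ipG w (zb k)) *: zb k.
Definition V w := w - P w.

Lemma cen_sum (I : Type) (r : seq I) (Q : pred I) (F : I -> 'rV[R]_n) :
  (forall i, cen (F i)) -> cen (\sum_(i <- r | Q i) F i).
Proof.
move=> hF; apply: (big_ind (fun x => cen x)) => //; first exact: cen0.
by move=> x y; apply: cenD.
Qed.
Lemma cenP w : cen (P w).
Proof. by apply: cen_sum => k; apply: cenZ. Qed.

Lemma ipP_zb w l : ipG (P w) (zb l) = ipG w (zb l).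
Proof.
rewrite /P ipSl (bigD1 l) //= big1 ?addr0.
  by rewrite ipZl -/(eps l) mulrAC eps2 mul1r.
by move=> k hk; rewrite ipZl zbo // mulr0.
Qed.

Lemma orth_cen x : (forall l, ipG x (zb l) = 0) -> forall c, cen c -> ipG x c = 0.
Proof.
move=> hx c /zbs [cc ->]; rewrite ipSr big1 // => k _.
by rewrite ipZr hx mulr0.
Qed.

Lemma invV w : inv (V w).
Proof. by move=> c; apply: orth_cen => l; rewrite /V ipBl ipP_zb subrr. Qed.

Lemma PV w : w = P w + V w.
Proof. by rewrite /V addrC subrK. Qed.

Lemma VC c : cen c -> V c = 0.
Proof.
move=> hc; apply: cnd.
  by rewrite /V -scaleN1r addrC; apply: cen_lin => //; apply: cenP.
by move=> z' hz'; apply: invV.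
Qed.
Lemma PC c : cen c -> P c = c.
Proof. by move=> hc; rewrite {2}(PV c) VC // addr0. Qed.
Lemma Pv x : inv x -> P x = 0.
Proof.
move=> hx; rewrite /P big1 // => k _.
by rewrite hx // mulr0 scale0r.
Qed.
Lemma Vv x : inv x -> V x = x.
Proof. by move=> hx; rewrite /V Pv // subr0. Qed.
Lemma Plin : lin P.
Proof.
move=> a x y; rewrite /P scaler_sumr -big_split; apply: eq_bigr => k _ /=.
by rewrite ipDl ipZl mulrDr scalerDl scalerA mulrCA.
Qed.
Lemma Vlin : lin V.
Proof.
move=> a x y; rewrite /V Plin scalerBr.
by rewrite opprD addrACA.
Qed.
Lemma PP w : P (P w) = P w. Proof. by rewrite PC //; apply: cenP. Qed.

Lemma ipev x i : ipG x (e i) = (x *m G) 0 i.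
Proof. by rewrite /ip /ev trmx_delta -colE mxE. Qed.

Lemma nondeg u : (forall t, ipG u t = 0) -> u = 0.
Proof.
move=> hu; have h0 : u *m G = 0.
  by apply/rowP => i; rewrite -ipev hu mxE.
by rewrite -(mulmxK Gunit u) h0 mul0mx.
Qed.

Lemma nondeg_v u : inv u -> (forall y, inv y -> ipG u y = 0) -> u = 0.
Proof.
move=> hu hy; apply: nondeg => t.
by rewrite (PV t) ipDr (hy (V t) (invV t)) (ipC u) ipcv ?add0r ?addr0 //; apply: cenP.
Qed.

Lemma jlin2 z a x y : cen z -> inv x -> inv y -> j z (a *: x + y) = a *: j z x + j z y.
Proof.
move=> hz hx hy; apply/eqP; rewrite -subr_eq0; apply/eqP.
have hxy : inv (a *: x + y) by apply: inv_lin.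
apply: nondeg_v.
  rewrite -scaleN1r addrC; apply: inv_lin; last by apply: (jdef _ _ hz hxy).1.
  by apply: inv_lin; [apply: (jdef _ _ hz hx).1 | apply: (jdef _ _ hz hy).1].
move=> t ht; rewrite ipBl ipDl ipZl ![ipG (j _ _) t]ipC.
rewrite -(jdef _ _ hz hxy).2 // -(jdef _ _ hz hx).2 // -(jdef _ _ hz hy).2 //.
by rewrite brDl brZl ipDl ipZl subrr.
Qed.

Lemma jlin1 z z' a x : cen z -> cen z' -> inv x -> j (a *: z + z') x = a *: j z x + j z' x.
Proof.
move=> hz hz' hx; apply/eqP; rewrite -subr_eq0; apply/eqP.
have hzz : cen (a *: z + z') by apply: cen_lin.
apply: nondeg_v.
  rewrite -scaleN1r addrC; apply: inv_lin; last by apply: (jdef _ _ hzz hx).1.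
  by apply: inv_lin; [apply: (jdef _ _ hz hx).1 | apply: (jdef _ _ hz' hx).1].
move=> t ht; rewrite ipBl ipDl ipZl ![ipG (j _ _) t]ipC.
rewrite -(jdef _ _ hzz hx).2 // -(jdef _ _ hz hx).2 // -(jdef _ _ hz' hx).2 //.
by rewrite ipDr ipZr subrr.
Qed.

Lemma inv0 : inv 0. Proof. by move=> c _; rewrite ip0l. Qed.
Lemma j0l x : inv x -> j 0 x = 0.
Proof.
move=> hx; have := jlin1 0 0 (-1) x cen0 cen0 hx.
by rewrite scaler0 addr0 scaleN1r addNr.
Qed.
Lemma j0r z : cen z -> j z 0 = 0.
Proof.
move=> hz; have := jlin2 z (-1) 0 0 hz inv0 inv0.
by rewrite scaler0 addr0 scaleN1r addNr.
Qed.

Fact J_key : unit. Proof. exact: tt. Qed.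
Definition J := locked_with J_key (fun c u => j (P c) (V u)).
Lemma JE c u : J c u = j (P c) (V u). Proof. by rewrite /J unlock. Qed.

Lemma Jv c u : inv (J c u).
Proof. rewrite JE; exact: (jdef _ _ (cenP c) (invV u)).1. Qed.

Lemma brV u t : br u t = br (V u) (V t).
Proof.
rewrite {1}(PV u) brDl (cenP u) add0r {1}(PV t) brDr cen_r ?add0r //.
exact: cenP.
Qed.

Lemma JK u t c : ipG (br u t) c = ipG t (J c u).
Proof.
rewrite brV {1}(PV c) ipDr (ipcv _ _ (cen_br _ _) (invV c)) addr0.
rewrite ((jdef _ _ (cenP c) (invV u)).2 (V t) (invV t)).
have h := ipcv _ _ (cenP t) (Jv c u).
by rewrite -JE /V ipBl h subr0.
Qed.

Lemma Jskew c u t : ipG (J c u) t = - ipG u (J c t).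
Proof. by rewrite ipC -JK brA ipNl JK. Qed.

Lemma Jl u : lin (fun c => J c u).
Proof. by move=> a c d; rewrite !JE Plin jlin1 //; [apply: cenP | apply: cenP | apply: invV]. Qed.
Lemma Jr c : lin (J c).
Proof. by move=> a u w; rewrite !JE Vlin jlin2 //; [apply: cenP | apply: invV | apply: invV]. Qed.

Lemma JDl x y w : J (x + y) w = J x w + J y w. Proof. exact: (linD _ _ _ (Jl w)). Qed.
Lemma JDr x y w : J w (x + y) = J w x + J w y. Proof. exact: (linD _ _ _ (Jr w)). Qed.
Lemma JZl a x w : J (a *: x) w = a *: J x w. Proof. exact: (linZ _ _ _ (Jl w)). Qed.
Lemma JZr a x w : J w (a *: x) = a *: J w x. Proof. exact: (linZ _ _ _ (Jr w)). Qed.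
Lemma JNl x w : J (- x) w = - J x w. Proof. exact: (linN _ _ (Jl w)). Qed.
Lemma JNr x w : J w (- x) = - J w x. Proof. exact: (linN _ _ (Jr w)). Qed.
Lemma JBl x y w : J (x - y) w = J x w - J y w. Proof. exact: (linB _ _ _ (Jl w)). Qed.
Lemma JBr x y w : J w (x - y) = J w x - J w y. Proof. exact: (linB _ _ _ (Jr w)). Qed.

Lemma Jvl x u : inv x -> J x u = 0.
Proof. by move=> hx; rewrite JE Pv // j0l //; apply: invV. Qed.
Lemma Jcr c u : cen u -> J c u = 0.
Proof. by move=> hu; rewrite JE VC // j0r //; apply: cenP. Qed.
Lemma JJ0 x y u : J (J x y) u = 0. Proof. exact: Jvl (Jv _ _). Qed.
Lemma Jbr0 x y u : J u (br x y) = 0. Proof. exact: Jcr (cen_br _ _). Qed.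
Lemma JP c u : J (P c) u = J c u. Proof. by rewrite !JE PP. Qed.

Lemma JJ c u : J c (J c u) = - phi (P c) *: V u.
Proof.
rewrite !JE Vv; last exact: (jdef _ _ (cenP c) (invV u)).1.
by rewrite Htype //; [apply: cenP | apply: invV].
Qed.

Lemma zmod4 (W : zmodType) (a x y b : W) : a + x + (y + b) - a - b = x + y.
Proof. by rewrite (addrC y b) addrACA (addrC (a + b)) -(addrA _ (- a) (- b)) -opprD addrK. Qed.

Lemma Janti z z' u : cen z -> cen z' ->
  J z (J z' u) + J z' (J z u) = - (2%:R * polar phi z z') *: V u.
Proof.
move=> hz hz'; have hzz : cen (z + z') by apply: cenD.
have h := JJ (z + z') u.
rewrite !JDl !JDr (JJ z u) (JJ z' u) (PC _ hzz) (PC _ hz) (PC _ hz') in h.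
have -> : 2%:R * polar phi z z' = phi (z + z') - phi z - phi z'.
  by rewrite /polar mulrC divfK // pnatr_eq0.
rewrite !scaleNr in h; rewrite !scaleNr !scalerBl !opprD -h.
by rewrite zmod4.
Qed.

Lemma lin_id : lin (fun x => x). Proof. by []. Qed.
Lemma lin_comp f g : lin f -> lin g -> lin (fun x => f (g x)).
Proof. by move=> hf hg a x y; rewrite hg hf. Qed.

Definition h : R := 2%:R^-1.
Definition Lf u w := h *: (br u w - J u w - J w u).

Lemma koszulE u w t : koszul G br u w t = ipG (Lf u w) t.
Proof.
rewrite /koszul /Lf ipZl !ipBl (brA t u) ipNl (JK w t u) (JK u t w).
by rewrite (ipC t (J u w)) (ipC t (J w u)) mulrC.
Qed.

Lemma LCE u w : LC G br u w = Lf u w.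
Proof.
rewrite /LC; have -> : \row_j koszul G br u w (ev R j) = Lf u w *m G.
  by apply/rowP => k; rewrite [LHS]mxE koszulE ipev.
exact: mulmxK.
Qed.

Definition d (i : 'I_n) := e i *m invmx G.

Lemma ipd x i : ipG x (d i) = x 0 i.
Proof.
by rewrite /ip /d trmx_mul trmx_inv Gsym mulmxA (mulmxK Gunit) /ev trmx_delta -colE mxE.
Qed.

Lemma res1 u : \sum_i ipG u (e i) *: d i = u.
Proof.
rewrite /d; under eq_bigr => i _ do rewrite ipev /ev scalemxAl.
by rewrite -mulmx_suml -(row_sum_delta (u *m G)) (mulmxK Gunit).
Qed.

Lemma res2 u : \sum_i ipG u (d i) *: e i = u.
Proof.
under eq_bigr => i _ do rewrite ipd /ev.
by rewrite -row_sum_delta.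
Qed.

Lemma ricE b c : ric G br b c = \sum_i ipG (curv G br (e i) b c) (d i).
Proof. by rewrite /ric; apply: eq_bigr => i _; rewrite ipd. Qed.

Lemma ip_rep f t : slin f -> ipG ((\row_j f (e j)) *m invmx G) t = f t.
Proof.
move=> hf; rewrite /ip (mulmxKV Gunit) mxE [in RHS](row_sum_delta t) (slinS _ _ _ _ _ hf).
apply: eq_bigr => k _; rewrite !mxE slinZ // mulrC.
by [].
Qed.

Lemma cenTrace F : lin F -> (forall w, cen (F w)) ->
  \sum_i ipG (F (e i)) (d i) = \sum_k eps k * ipG (F (zb k)) (zb k).
Proof.
move=> hF hc.
have -> : \sum_i ipG (F (e i)) (d i) =
    \sum_i \sum_k eps k * ipG (d i) (zb k) * ipG (F (e i)) (zb k).
  apply: eq_bigr => i _.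
  rewrite {1}(PV (d i)) ipDr (ipcv _ _ (hc _) (invV _)) addr0 /P ipSr.
  by apply: eq_bigr => k _; rewrite ipZr.
rewrite exchange_big; apply: eq_bigr => k _ /=.
have -> : \sum_i eps k * ipG (d i) (zb k) * ipG (F (e i)) (zb k) =
    eps k * ipG (F (\sum_i ipG (d i) (zb k) *: e i)) (zb k).
  rewrite (linS _ _ _ _ _ hF) ipSl mulr_sumr; apply: eq_bigr => i _.
  by rewrite (linZ _ _ _ hF) ipZl mulrA.
congr (_ * ipG (F _) _).
under eq_bigr => i _ do rewrite ipC.
exact: res2.
Qed.

Lemma cyc A B : lin A -> lin B ->
  \sum_i ipG (A (e i)) (B (d i)) = \sum_i ipG (B (e i)) (A (d i)).
Proof.
move=> hA hB.
have ex : forall C, lin C -> forall i, C (d i) = \sum_l ipG (d i) (d l) *: C (e l).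
  move=> C hC i; rewrite -{1}(res2 (d i)) (linS _ _ _ _ _ hC).
  by apply: eq_bigr => l _; rewrite (linZ _ _ _ hC).
transitivity (\sum_i \sum_l ipG (d i) (d l) * ipG (A (e i)) (B (e l))).
  by apply: eq_bigr => i _; rewrite (ex B hB) ipSr; apply: eq_bigr => l _; rewrite ipZr.
symmetry.
transitivity (\sum_i \sum_l ipG (d i) (d l) * ipG (B (e i)) (A (e l))).
  by apply: eq_bigr => i _; rewrite (ex A hA) ipSr; apply: eq_bigr => l _; rewrite ipZr.
rewrite exchange_big; apply: eq_bigr => i _; apply: eq_bigr => l _.
by rewrite ipC (ipC (B _)).
Qed.

Lemma curvE a b c t : ipG (curv G br a b c) t =
  h * h * (- ipG (br a (J b c)) t - ipG (br a (J c b)) t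
    + ipG (J a (J b c)) t + ipG (J a (J c b)) t - ipG (J (br b c) a) t
    + ipG (br b (J a c)) t + ipG (br b (J c a)) t - ipG (J b (J a c)) t
    - ipG (J b (J c a)) t + ipG (J (br a c) b) t)
  + h * ipG (J (br a b) c) t.
Proof.
rewrite /curv !LCE.
apply: (@abs_curv _ _ br J (fun x => ipG x t) h) => *;
  first [exact: brDl | exact: brDr | exact: brZl | exact: brZr | exact: brNl | exact: brNr
  | exact: JDl | exact: JDr | exact: JZl | exact: JZr | exact: JNl | exact: JNr
  | exact: ipDl | exact: ipZl | exact: ipNl | exact: br2 | exact: brbr0 | exact: JJ0
  | exact: Jbr0].
Qed.


Definition S b c := \sum_k eps k * ipG (J (zb k) c) (J (zb k) b).
Definition T9 b c := \sum_i ipG (J b (J c (e i))) (d i).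

Lemma cenTrace0 F : lin F -> (forall w, cen (F w)) -> (forall k, F (zb k) = 0) ->
  \sum_i ipG (F (e i)) (d i) = 0.
Proof.
move=> hF hc h0; rewrite (cenTrace _ hF hc) big1 // => k _.
by rewrite h0 ip0l mulr0.
Qed.

Lemma TT1 u : \sum_i ipG (br (e i) u) (d i) = 0.
Proof.
apply: (@cenTrace0 (fun w => br w u)); [exact: brl | by move=> w; apply: cen_br | by move=> k; apply: zbc].
Qed.

Lemma TT3 u : \sum_i ipG (J (e i) u) (d i) = 0.
Proof.
transitivity (\sum_i ipG ((fun x => x) (e i)) (br u (d i))).
  by apply: eq_bigr => i _; rewrite ipC -JK ipC.
rewrite (cyc _ _ lin_id (brr u)).
apply: cenTrace0; [exact: brr | by move=> w; apply: cen_br | by move=> k; apply: cen_r].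
Qed.

Lemma selfopp (x : R) : x = - x -> x = 0.
Proof.
move=> hx; have : 2%:R * x = 0 by rewrite mulr_natl mulr2n {1}hx addNr.
by move/eqP; rewrite mulf_eq0 pnatr_eq0 /= => /eqP.
Qed.

Lemma TT5 c0 : \sum_i ipG (J c0 (e i)) (d i) = 0.
Proof.
apply: selfopp.
transitivity (- \sum_i ipG ((fun x => x) (e i)) (J c0 (d i))).
  by rewrite -sumrN; apply: eq_bigr => i _; apply: Jskew.
by rewrite (cyc _ _ lin_id (Jr c0)).
Qed.

Lemma TT6 b c : \sum_i ipG (br b (J (e i) c)) (d i) = S b c.
Proof.
rewrite (cenTrace _ (lin_comp _ _ (brr b) (Jl c))); last by move=> w; apply: cen_br.
by apply: eq_bigr => k _; rewrite JK.
Qed.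

Lemma TT7 b c : \sum_i ipG (br b (J c (e i))) (d i) = 0.
Proof.
apply: (@cenTrace0 (fun w => br b (J c w))).
- exact: lin_comp _ _ (brr b) (Jr c).
- by move=> w; apply: cen_br.
- by move=> k; rewrite Jcr ?br0r.
Qed.

Lemma TT8 b c : \sum_i ipG (J b (J (e i) c)) (d i) = 0.
Proof.
transitivity (- \sum_i ipG ((fun x => x) (e i)) (br c (J b (d i)))).
  rewrite -sumrN; apply: eq_bigr => i _ /=.
  by rewrite (Jskew b (J (e i) c) (d i)) (ipC (J (e i) c)) -JK ipC.
rewrite (cyc _ _ lin_id (lin_comp _ _ (brr c) (Jr b))).
rewrite (@cenTrace0 (fun w => br c (J b w))) ?oppr0 //.
- exact: lin_comp _ _ (brr c) (Jr b).
- by move=> w; apply: cen_br.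
- by move=> k; rewrite Jcr ?br0r.
Qed.

Lemma ipcc c1 c2 : cen c2 -> ipG c1 c2 = \sum_k eps k * ipG c1 (zb k) * ipG c2 (zb k).
Proof.
move=> h2; rewrite -{1}(PC _ h2) /P ipSr; apply: eq_bigr => k _.
by rewrite ipZr mulrAC.
Qed.

Lemma TT10 b c : \sum_i ipG (J (br (e i) c) b) (d i) = - S b c.
Proof.
transitivity (\sum_i \sum_k - (eps k * (ipG (J (zb k) c) (e i) * ipG (d i) (J (zb k) b)))).
  apply: eq_bigr => i _.
  rewrite ipC -JK (ipcc _ _ (cen_br _ _)); apply: eq_bigr => k _.
  rewrite !JK -[ipG c _]opprK -Jskew.
  ring.
rewrite exchange_big /S -sumrN; apply: eq_bigr => k _ /=.
rewrite sumrN -mulr_sumr; congr (- (_ * _)).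
transitivity (ipG (\sum_i ipG (J (zb k) c) (e i) *: d i) (J (zb k) b)).
  by rewrite ipSl; apply: eq_bigr => i _; rewrite ipZl.
by rewrite res1.
Qed.

Lemma Ssym b c : S c b = S b c.
Proof. by apply: eq_bigr => k _; rewrite ipC. Qed.

Lemma sum_combo (A1 A2 A3 A4 A5 A6 A7 A8 A9 A10 A11 : 'I_n -> R) :
  \sum_i (h * h * (- A1 i - A2 i + A3 i + A4 i - A5 i + A6 i + A7 i - A8 i - A9 i + A10 i)
     + h * A11 i) =
  h * h * (- \sum_i A1 i - \sum_i A2 i + \sum_i A3 i + \sum_i A4 i - \sum_i A5 i
     + \sum_i A6 i + \sum_i A7 i - \sum_i A8 i - \sum_i A9 i + \sum_i A10 i)
  + h * \sum_i A11 i.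
Proof.
rewrite big_split /= -!mulr_sumr.
by rewrite !(big_split, sumrN, sumrB) /=.
Qed.

Lemma ricF b c : ric G br b c = - (h * h) * T9 b c - h * S b c.
Proof.
rewrite ricE; under eq_bigr => i _ do rewrite curvE.
rewrite sum_combo.
rewrite !TT1 !TT3 TT5 TT6 TT7 TT8 !TT10 -/(T9 b c) (Ssym c b).
ring.
Qed.

Lemma trV : \sum_i ipG (V (e i)) (d i) = m%:R.
Proof.
have hC : forall i, exists c : 'I_m -> R, V (e i) = \sum_k c k *: vb k.
  by move=> i; apply: vbs; apply: invV.
pose C i := proj1_sig (constructive_indefinite_description _ (hC i)).
have HC : forall i, V (e i) = \sum_k C i k *: vb k.
  by move=> i; exact: (proj2_sig (constructive_indefinite_description _ (hC i))).
have key : forall l k, \sum_i (vb l) 0 i * C i k = (l == k)%:R.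
  move=> l.
  have e1 : \sum_k (\sum_i (vb l) 0 i * C i k - (l == k)%:R) *: vb k = 0.
    transitivity (vb l - vb l); last by rewrite subrr.
    rewrite (eq_bigr (fun k => (\sum_i (vb l) 0 i * C i k) *: vb k - (l == k)%:R *: vb k));
      last by move=> k _; rewrite scalerBl.
    rewrite sumrB; congr (_ - _).
      symmetry; transitivity (V (vb l)); first by rewrite Vv.
      rewrite {1}(row_sum_delta (vb l)) (linS _ _ _ _ _ Vlin).
      transitivity (\sum_i \sum_k ((vb l) 0 i * C i k) *: vb k).
        apply: eq_bigr => i _; rewrite (linZ _ _ _ Vlin).
        rewrite (HC i) scaler_sumr; apply: eq_bigr => k _; by rewrite scalerA.
      rewrite exchange_big; apply: eq_bigr => k _ /=.
      by rewrite scaler_suml.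
    rewrite (bigD1 l) //= eqxx scale1r big1 ?addr0 // => k hk.
    by rewrite eq_sym (negbTE hk) scale0r.
  move=> k; have := vbi _ e1 k.
  by move/eqP; rewrite subr_eq0 => /eqP.
transitivity (\sum_i \sum_k C i k * (vb k) 0 i).
  by apply: eq_bigr => i _; rewrite HC ipSl; apply: eq_bigr => k _; rewrite ipZl ipd.
rewrite exchange_big /= (eq_bigr (fun _ => 1)) ?sumr_const ?card_ord //.
move=> k _; have e2 : (k == k)%:R = 1 :> R by rewrite eqxx.
rewrite -e2 -key.
by apply: eq_bigr => i _; rewrite mulrC.
Qed.

Lemma T9v x t : inv x -> T9 x t = 0.
Proof. by move=> hx; rewrite /T9 big1 // => i _; rewrite Jvl // ip0l. Qed.

Lemma T9P z t : T9 z t = T9 z (P t).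
Proof. by rewrite /T9; apply: eq_bigr => i _; rewrite JP. Qed.

Lemma T9sym z z' : T9 z z' = T9 z' z.
Proof.
rewrite /T9.
transitivity (- \sum_i ipG (J z' (e i)) (J z (d i))).
  by rewrite -sumrN; apply: eq_bigr => i _; apply: Jskew.
rewrite (cyc _ _ (Jr z') (Jr z)) -sumrN; apply: eq_bigr => i _.
by rewrite (Jskew z' (J z (e i))).
Qed.

Lemma T9c z z' : cen z -> cen z' -> T9 z z' = - (m%:R * polar phi z z').
Proof.
move=> hz hz'.
have h2 : T9 z z' + T9 z z' = - (2%:R * polar phi z z') * m%:R.
  rewrite {2}T9sym /T9 -big_split /=.
  rewrite (eq_bigr (fun i => ipG (- (2%:R * polar phi z z') *: V (e i)) (d i))).
    by rewrite -trV mulr_sumr; apply: eq_bigr => i _; rewrite ipZl.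
  by move=> i _; rewrite -ipDl Janti.
apply: (@mulfI _ 2%:R); first by rewrite pnatr_eq0.
rewrite mulr_natl mulr2n h2.
ring.
Qed.

Definition xi := \sum_k ipG (zb k) (zb k) * phi (zb k).

Lemma Sv x t : inv x -> S x t = xi * ipG x t.
Proof.
move=> hx; rewrite /S /xi mulr_suml; apply: eq_bigr => k _.
rewrite Jskew JJ (PC _ (zbc k)) (Vv _ hx) ipZr ipC /eps.
ring.
Qed.

Lemma ricv x t : inv x -> ric G br x t = - (xi / 2%:R) * ipG x t.
Proof.
move=> hx; rewrite ricF T9v // Sv // /h.
ring.
Qed.

Lemma Sc z t : cen z -> S z t = 0.
Proof. by move=> hz; rewrite /S big1 // => k _; rewrite (Jcr _ _ hz) ip0r mulr0. Qed.

Lemma ricz z t : cen z -> ric G br z t = h * h * (m%:R * polar phi z (P t)).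
Proof.
move=> hz; rewrite ricF Sc // T9P (T9c _ _ hz (cenP t)).
ring.
Qed.

Lemma addE (A B : 'M[R]_(1,1)) : (A + B) 0 0 = A 0 0 + B 0 0.
Proof. by rewrite mxE. Qed.
Lemma scaleE a (A : 'M[R]_(1,1)) : (a *: A) 0 0 = a * A 0 0.
Proof. by rewrite mxE. Qed.

Lemma polar_lin z : cen z -> slin (fun t => polar phi z (P t)).
Proof.
move=> hz; case: phiQ => Q hQ.
have tq : forall w : 'rV[R]_n, (z *m Q *m w^T) 0 0 = (w *m (Q^T *m z^T)) 0 0.
  move=> w; transitivity (((z *m Q *m w^T)^T) 0 0); first by rewrite [RHS]mxE.
  by rewrite !trmx_mul trmxK.
have pe : forall w : 'rV[R]_n, cen w ->
    polar phi z w = ((w *m (Q^T *m z^T)) 0 0 + (w *m (Q *m z^T)) 0 0) / 2%:R.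
  move=> w hw; rewrite /polar !hQ //; last by apply: cenD.
  rewrite raddfD /= !mulmxDl !mulmxDr !addE (tq w) -!mulmxA.
  by field.
move=> a x y /=; rewrite Plin !pe; [| by apply: cenP | by apply: cenP |].
  rewrite !mulmxDl -!scalemxAl !addE !scaleE.
  by field.
by apply: cen_lin; apply: cenP.
Qed.

Lemma partA x : inv x -> Rc G br x = - (xi / 2%:R) *: x.
Proof.
move=> hx; have hsl : slin (ric G br x).
  by move=> a y w; rewrite !(ricv _ _ hx) ipDr ipZr; ring.
apply/eqP; rewrite -subr_eq0; apply/eqP; apply: nondeg => t.
by rewrite ipBl /Rc (ip_rep _ _ hsl) (ricv _ _ hx) ipZl subrr.
Qed.

Lemma partB z : cen z -> cen (Rc G br z) /\
  (forall z', cen z' -> ipG (Rc G br z) z' = (m%:R / 4%:R) * polar phi z z').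
Proof.
move=> hz; have hsl : slin (ric G br z).
  by move=> a x y; rewrite !(ricz _ _ hz) (polar_lin _ hz a x y); ring.
have hR : forall t, ipG (Rc G br z) t = h * h * (m%:R * polar phi z (P t)).
  by move=> t; rewrite /Rc (ip_rep _ _ hsl) (ricz _ _ hz).
split.
  have p0 : polar phi z 0 = 0.
    by have := slin0 _ (polar_lin _ hz); rewrite /= (lin0 _ Plin).
  have hV : V (Rc G br z) = 0.
    apply: nondeg_v; first exact: invV.
    move=> y hy; rewrite /V ipBl hR (Pv _ hy) p0 (ipcv _ _ (cenP _) hy).
    by rewrite mulr0 mulr0 subrr.
  by rewrite (PV (Rc G br z)) hV addr0; apply: cenP.
move=> z' hz'; rewrite hR (PC _ hz') /h.
by field.
Qed.

End Main.

Theorem theorem3p5 (R : realFieldType) (n p m : nat) (G : 'M[R]_n)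
  (br : 'rV[R]_n -> 'rV[R]_n -> 'rV[R]_n) (phi : 'rV[R]_n -> R)
  (j : 'rV[R]_n -> 'rV[R]_n -> 'rV[R]_n)
  (zb : 'I_p -> 'rV[R]_n) (vb : 'I_m -> 'rV[R]_n) :
  (* nondegenerate symmetric metric *)
  G^T = G -> G \in unitmx ->
  (* Lie bracket: bilinear, antisymmetric, 2-step nilpotent (non-abelian) *)
  (forall (a : R) x y w, br (a *: x + y) w = a *: br x w + br y w) ->
  (forall x y, br x y = - br y x) ->
  (forall x y w, br (br x y) w = 0) ->
  (exists x y, br x y != 0) ->
  (* the center is nondegenerate *)
  (forall z, center br z -> (forall z', center br z' -> ip G z z' = 0) -> z = 0) ->
  (* j(z) : v -> v defined by <[x,y],z> = <y, j(z) x> for x, y in v *)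
  (forall z x, center br z -> in_v G br x ->
     in_v G br (j z x) /\ (forall y, in_v G br y -> ip G (br x y) z = ip G y (j z x))) ->
  (* phi is a quadratic form on z *)
  (exists Q : 'M[R]_n, forall z, center br z -> phi z = (z *m Q *m z^T) 0 0) ->
  (* modified H-type condition: j(z)^2 = - phi(z) Id_v *)
  (forall z x, center br z -> in_v G br x -> j z (j z x) = - phi z *: x) ->
  (* zb : pseudo-orthonormal basis of z *)
  (forall k, center br (zb k)) ->
  (forall k l, k != l -> ip G (zb k) (zb l) = 0) ->
  (forall k, ip G (zb k) (zb k) = 1 \/ ip G (zb k) (zb k) = -1) ->
  (forall z, center br z -> exists c : 'I_p -> R, z = \sum_k c k *: zb k) ->
  (* vb : basis of v, so m = dim v *)
  (forall k, in_v G br (vb k)) ->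
  (forall c : 'I_m -> R, \sum_k c k *: vb k = 0 -> forall k, c k = 0) ->
  (forall x, in_v G br x -> exists c : 'I_m -> R, x = \sum_k c k *: vb k) ->
  let xi := \sum_k ip G (zb k) (zb k) * phi (zb k) in
  (* Rc|_v = -xi/2 Id_v (in particular Rc preserves v) *)
  (forall x, in_v G br x -> Rc G br x = - (xi / 2%:R) *: x) /\
  (* Rc preserves z and Rc|_z = m/4 Id^dagger_phi *)
  (forall z, center br z ->
     center br (Rc G br z) /\
     (forall z', center br z' -> ip G (Rc G br z) z' = (m%:R / 4%:R) * polar phi z z')).
Proof.
move=> Gsym Gunit brlin brA br2 _ cnd jdef phiQ Htype zbc zbo zbn zbs vbv vbi vbs xi0.
split.
  move=> x hx; eapply partA; eassumption.
move=> z hz; eapply partB; eassumption.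
Qed.
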